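(* Assume Assumption 1 (randomization) and $0<P(Z=1\mid R=r)<1$, without assuming monotonicity. If $P_{01r}>P_{10r}$, then $\pi_{ss,r}>0$ and $$\max\Big\{0,1-\frac{(1-Q_{11r})P_{11r}}{P_{01r}-P_{10r}}\Big\}-\min\Big\{1,\frac{Q_{01r}P_{01r}}{P_{01r}-P_{10r}}\Big\}\ \le\ ACE_{ss,r}\ \le\ \min\Big\{1,\frac{Q_{11r}P_{11r}}{P_{01r}-P_{10r}}\Big\}+\min\Big\{0,\frac{(1-Q_{01r})P_{01r}}{P_{01r}-P_{10r}}-1\Big\}.$$
   Context: A unit has trial $R$, treatment $Z\in\{0,1\}$, binary potential surrogate and endpoint $S(z),Y(z)$; observed $S=ZS(1)+(1-Z)S(0)$, $Y=ZY(1)+(1-Z)Y(0)$. $U=(S(1),S(0))$ with $ss=(1,1)$, $s\bar{s}=(1,0)$, $\bar{s}s=(0,1)$, $\bar{s}\bar{s}=(0,0)$; $\pi_{ur}=P(U=u\mid R=r)$; $ACE_{ur}=E\{Y(1)-Y(0)\mid U=u,R=r\}$. $P_{zsr}=P(S=s\mid Z=z,R=r)$ and $Q_{zsr}=P(Y=1\mid Z=z,S=s,R=r)$. Assumption 1 (randomization): $Z\perp\!\!\!\perp\{S(1),S(0),Y(1),Y(0)\}\mid R$. *)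

(* Defs.v *)
From HB Require Import structures.
From mathcomp Require Import all_boot all_order all_algebra.
Set Implicit Arguments. Unset Strict Implicit. Unset Printing Implicit Defensive.
Import Order.TTheory GRing.Theory Num.Theory.
Local Open Scope ring_scope.

(* An outcome of the experiment for one unit:
   (((((R, Z), S(1)), S(0)), Y(1)), Y(0)) with R in a finite set I of trials. *)
Definition outcome (I : finType) : finType :=
  (I * bool * bool * bool * bool * bool)%type.

Definition trial {I : finType} (w : outcome I) : I := w.1.1.1.1.1.
Definition treat {I : finType} (w : outcome I) : bool := w.1.1.1.1.2.
Definition S1 {I : finType} (w : outcome I) : bool := w.1.1.1.2.
Definition S0 {I : finType} (w : outcome I) : bool := w.1.1.2.
Definition Y1 {I : finType} (w : outcome I) : bool := w.1.2.
Definition Y0 {I : finType} (w : outcome I) : bool := w.2.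
Definition Sobs {I : finType} (w : outcome I) : bool := if treat w then S1 w else S0 w.
Definition Yobs {I : finType} (w : outcome I) : bool := if treat w then Y1 w else Y0 w.

Definition is_distr {F : realFieldType} {I : finType} (p : outcome I -> F) : Prop :=
  (forall w, 0 <= p w) /\ \sum_(w : outcome I) p w = 1.

Definition Prob {F : realFieldType} {I : finType} (p : outcome I -> F)
  (A : pred (outcome I)) : F := \sum_(w | A w) p w.

(* P(A | B)  (conventionally 0 when P(B) = 0) *)
Definition CondP {F : realFieldType} {I : finType} (p : outcome I -> F)
  (A B : pred (outcome I)) : F :=
  Prob p (fun w => A w && B w) / Prob p B.

Definition CondE {F : realFieldType} {I : finType} (p : outcome I -> F)
  (f : outcome I -> F) (B : pred (outcome I)) : F :=
  (\sum_(w | B w) p w * f w) / Prob p B.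

Definition randomization {F : realFieldType} {I : finType} (p : outcome I -> F) : Prop :=
  forall (r : I) (z a b c d : bool),
    CondP p (fun w => (treat w == z) && [&& S1 w == a, S0 w == b, Y1 w == c & Y0 w == d])
            (fun w => trial w == r)
    = CondP p (fun w => treat w == z) (fun w => trial w == r)
      * CondP p (fun w => [&& S1 w == a, S0 w == b, Y1 w == c & Y0 w == d])
                (fun w => trial w == r).

Definition pi_ss {F : realFieldType} {I : finType} (p : outcome I -> F) (r : I) : F :=
  CondP p (fun w => S1 w && S0 w) (fun w => trial w == r).

Definition ACE_ss {F : realFieldType} {I : finType} (p : outcome I -> F) (r : I) : F :=
  CondE p (fun w => (Y1 w)%:R - (Y0 w)%:R) (fun w => [&& S1 w, S0 w & trial w == r]).

Definition Pzsr {F : realFieldType} {I : finType} (p : outcome I -> F)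
  (z s : bool) (r : I) : F :=
  CondP p (fun w => Sobs w == s) (fun w => (treat w == z) && (trial w == r)).

Definition Qzsr {F : realFieldType} {I : finType} (p : outcome I -> F)
  (z s : bool) (r : I) : F :=
  CondP p (fun w => Yobs w)
          (fun w => [&& treat w == z, Sobs w == s & trial w == r]).

(* Main.v *)
Require Import Defs.
From HB Require Import structures.
From mathcomp Require Import all_boot all_order all_algebra ring lra.
Import Order.TTheory GRing.Theory Num.Theory.
Local Open Scope ring_scope.

Lemma core (F : realFieldType) (m Gab Gabc Gabd Ga Gac Gb Gbd Gna : F) :
  0 < m -> Gna / m < Gb / m ->
  Gb - Gna <= Gab ->
  0 <= Gabc -> Gabc <= Gab -> 0 <= Gabd -> Gabd <= Gab ->
  Gabc <= Gac -> Gab - Gabc <= Ga - Gac ->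
  Gabd <= Gbd -> Gab - Gabd <= Gb - Gbd ->
  0 < Gab / m /\
  Num.max 0 (1 - (Ga / m - Gac / m) / (Gb / m - Gna / m))
    - Num.min 1 (Gbd / m / (Gb / m - Gna / m))
  <= (Gabc - Gabd) / Gab
  <= Num.min 1 (Gac / m / (Gb / m - Gna / m))
    + Num.min 0 ((Gb / m - Gbd / m) / (Gb / m - Gna / m) - 1).
Proof.
move=> m0 hd hdp h1 h2 h3 h4 h5 h6 h7 h8.
have hD : 0 < Gb - Gna by move: hd; rewrite ltr_pM2r ?invr_gt0 // subr_gt0.
have hpi : 0 < Gab by apply: lt_le_trans hdp.
have mn : m != 0 by rewrite gt_eqF.
have Dn : Gb - Gna != 0 by rewrite gt_eqF.
have E1 : forall x y, (x / m - y / m) / (Gb / m - Gna / m) = (x - y) / (Gb - Gna).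
  by move=> x y; field; rewrite mn Dn.
have E2 : forall x, x / m / (Gb / m - Gna / m) = x / (Gb - Gna).
  by move=> x; field; rewrite mn Dn.
rewrite !E1 !E2.
set D := Gb - Gna in hD hdp Dn E1 E2 *.
have dle : forall a b, 0 <= a -> a * D <= b * Gab -> a / Gab <= b / D.
  move=> a b a0 hab; rewrite ler_pdivrMr // mulrAC ler_pdivlMr //.
have dge : forall a b, 0 <= a -> b * Gab <= a * D -> b / D <= a / Gab.
  move=> a b a0 hab; rewrite ler_pdivrMr // mulrAC ler_pdivlMr //.
have t1u : Gabc / Gab <= Gac / D by apply: dle => //; nra.
have t0u : Gabd / Gab <= Gbd / D by apply: dle => //; nra.
have t1l : 1 - (Ga - Gac) / D <= Gabc / Gab.
  have : (Gab - Gabc) / Gab <= (Ga - Gac) / D by apply: dle; nra.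
  rewrite mulrBl divff ?gt_eqF //; lra.
have t0l : 1 - (Gb - Gbd) / D <= Gabd / Gab.
  have : (Gab - Gabd) / Gab <= (Gb - Gbd) / D by apply: dle; nra.
  rewrite mulrBl divff ?gt_eqF //; lra.
have t1a : 0 <= Gabc / Gab by rewrite divr_ge0 // ltW.
have t0a : 0 <= Gabd / Gab by rewrite divr_ge0 // ltW.
have t1b : Gabc / Gab <= 1 by rewrite ler_pdivrMr // mul1r.
have t0b : Gabd / Gab <= 1 by rewrite ler_pdivrMr // mul1r.
rewrite [(Gabc - Gabd) / Gab]mulrBl; split; first by rewrite divr_gt0.
apply/andP; split.
  have a1 : Num.max 0 (1 - (Ga - Gac) / D) <= Gabc / Gab by rewrite ge_max t1a t1l.
  have a2 : Gabd / Gab <= Num.min 1 (Gbd / D) by rewrite le_min t0b t0u.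
  lra.
have a1 : Gabc / Gab <= Num.min 1 (Gac / D) by rewrite le_min t1b t1u.
have a2 : - (Gabd / Gab) <= Num.min 0 ((Gb - Gbd) / D - 1).
  rewrite le_min; apply/andP; split; lra.
lra.
Qed.

Section Aux.
Context {F : realFieldType} {I : finType}.

Lemma sum_pair (T1 T2 : finType) (G : T1 * T2 -> F) :
  \sum_(w : T1 * T2) G w = \sum_(x : T1) \sum_(y : T2) G (x, y).
Proof. by rewrite pair_big; apply: eq_big => // [[x y]]. Qed.

Lemma expand (p : outcome I -> F) (r : I) (B : pred (outcome I)) :
  Prob p (fun w => B w && (trial w == r)) =
  \sum_(z : bool) \sum_(a : bool) \sum_(b : bool) \sum_(c : bool) \sum_(d : bool)
    (if B (r, z, a, b, c, d) then p (r, z, a, b, c, d) else 0).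
Proof.
rewrite /Prob big_mkcond /= !sum_pair (bigD1 r) //= [X in _ + X]big1 ?addr0.
  apply: eq_bigr => z _; apply: eq_bigr => a _; apply: eq_bigr => b _.
  apply: eq_bigr => c _; apply: eq_bigr => d _.
  by rewrite /trial /= eqxx andbT.
move=> i ir; apply: big1 => z _; apply: big1 => a _; apply: big1 => b _.
apply: big1 => c _; apply: big1 => d _.
by rewrite /trial /= (negbTE ir) andbF.
Qed.


Definition G (p : outcome I -> F) (r : I) (A : bool -> bool -> bool -> bool -> bool) :=
  Prob p (fun w => A (S1 w) (S0 w) (Y1 w) (Y0 w) && (trial w == r)).

Lemma atomsG (p : outcome I -> F) (r : I) A :
  G p r A = \sum_(a : bool) \sum_(b : bool) \sum_(c : bool) \sum_(d : bool)
    (if A a b c d then p (r, true, a, b, c, d) + p (r, false, a, b, c, d) else 0).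
Proof.
rewrite /G expand big_bool -big_split; apply: eq_bigr => a _.
rewrite -big_split; apply: eq_bigr => b _.
rewrite -big_split; apply: eq_bigr => c _.
rewrite -big_split; apply: eq_bigr => d _.
by rewrite /S1 /S0 /Y1 /Y0 /=; case: (A a b c d); rewrite ?addr0.
Qed.

Lemma Prob_ge0 (p : outcome I -> F) A : (forall w, 0 <= p w) -> 0 <= Prob p A.
Proof. by move=> p0; apply: sumr_ge0. Qed.

Lemma Prob_le (p : outcome I -> F) (A B : pred (outcome I)) :
  (forall w, 0 <= p w) -> (forall w, A w -> B w) -> Prob p A <= Prob p B.
Proof.
move=> p0 AB; rewrite /Prob [X in _ <= X](bigID A) /=.
have -> : \sum_(i | B i && A i) p i = \sum_(i | A i) p i.
  by apply: eq_bigl => w; case: (boolP (A w)) => Aw; rewrite ?andbT ?andbF ?AB.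
by rewrite lerDl sumr_ge0.
Qed.

Lemma atom (p : outcome I -> F) (r : I) z a b c d :
  randomization p -> Prob p (fun w => trial w == r) != 0 ->
  p (r, z, a, b, c, d) = CondP p (fun w => treat w == z) (fun w => trial w == r)
     * (p (r, true, a, b, c, d) + p (r, false, a, b, c, d)).
Proof.
move=> rand mn; have H := rand r z a b c d; move: H.
set cz := CondP p (fun w => treat w == z) _.
rewrite /CondP !expand; clearbody cz.
case: z a b c d => [] [] [] [] []; rewrite !big_bool /= ?add0r ?addr0 => H;
  by rewrite -[LHS](divfK mn) H -mulrA divfK.
Qed.


Lemma factor (p : outcome I -> F) (r : I) z A :
  randomization p -> Prob p (fun w => trial w == r) != 0 ->
  Prob p (fun w => (treat w == z) && A (S1 w) (S0 w) (Y1 w) (Y0 w) && (trial w == r))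
  = CondP p (fun w => treat w == z) (fun w => trial w == r) * G p r A.
Proof.
move=> rand mn; rewrite atomsG expand big_bool mulr_sumr.
case: z; rewrite /= !big1_eq ?addr0 ?add0r;
  apply: eq_bigr => a _; rewrite mulr_sumr; apply: eq_bigr => b _;
  rewrite mulr_sumr; apply: eq_bigr => c _; rewrite mulr_sumr; apply: eq_bigr => d _;
  case: (A a b c d); rewrite ?mulr0 //; exact: atom.
Qed.

End Aux.

Theorem propositionA1 (F : realFieldType) (I : finType) (p : outcome I -> F) (r : I) :
  is_distr p ->
  randomization p ->
  0 < CondP p (fun w => treat w) (fun w => trial w == r) < 1 ->
  Pzsr p true false r < Pzsr p false true r ->
  let d := Pzsr p false true r - Pzsr p true false r in
  0 < pi_ss p r /\
  Num.max 0 (1 - (1 - Qzsr p true true r) * Pzsr p true true r / d)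
    - Num.min 1 (Qzsr p false true r * Pzsr p false true r / d)
  <= ACE_ss p r
  <= Num.min 1 (Qzsr p true true r * Pzsr p true true r / d)
    + Num.min 0 ((1 - Qzsr p false true r) * Pzsr p false true r / d - 1).
Proof.
move=> [p0 _] rand /andP [hc0 hc1] hlt d.
have mge : 0 <= Prob p (fun w => trial w == r) by apply: Prob_ge0.
have mn : Prob p (fun w => trial w == r) != 0.
  apply/eqP => m0; move: hc0; by rewrite /CondP m0 invr0 mulr0 ltxx.
have m0 : 0 < Prob p (fun w => trial w == r) by rewrite lt_neqAle eq_sym mn.
have ct : CondP p (fun w => treat w == true) (fun w => trial w == r)
    = CondP p (fun w => treat w) (fun w => trial w == r).
  by rewrite /CondP /Prob; congr (_ / _); apply: eq_bigl => w; rewrite eqb_id.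
have hsum : Prob p (fun w => (treat w == true) && (trial w == r))
    + Prob p (fun w => (treat w == false) && (trial w == r))
    = Prob p (fun w => true && (trial w == r)).
  rewrite !expand !big_bool /=; lra.
have cf : CondP p (fun w => treat w == false) (fun w => trial w == r)
    = 1 - CondP p (fun w => treat w == true) (fun w => trial w == r).
  rewrite /CondP -[X in _ = 1 - _ / X]/(Prob p (fun w => true && (trial w == r))) -hsum.
  by field; move: mn; rewrite -[X in X != 0]/(Prob p (fun w => true && (trial w == r))) -hsum.
have cn : forall z, CondP p (fun w => treat w == z) (fun w => trial w == r) != 0.
  by case; rewrite ?cf ct gt_eqF // subr_gt0.
have hP : forall z s, Pzsr p z s r
    = G p r (fun a b (_ _ : bool) => (if z then a else b) == s) / Prob p (fun w => trial w == r).
  move=> z s; rewrite /Pzsr /CondP.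
  have -> : Prob p (fun w => (Sobs w == s) && ((treat w == z) && (trial w == r)))
    = Prob p (fun w => (treat w == z) && (fun a b (_ _ : bool) => (if z then a else b) == s)
                 (S1 w) (S0 w) (Y1 w) (Y0 w) && (trial w == r)).
    apply: eq_bigl => w /=; rewrite /Sobs.
    by case: (treat w); case: z; case: (S1 w); case: (S0 w); case: s; case: (trial w == r).
  have -> : Prob p (fun w => (treat w == z) && (trial w == r))
    = Prob p (fun w => (treat w == z) && (fun (_ _ _ _ : bool) => true)
                 (S1 w) (S0 w) (Y1 w) (Y0 w) && (trial w == r)).
    by apply: eq_bigl => w /=; rewrite andbT.
  rewrite (factor p r z (fun a b (_ _ : bool) => (if z then a else b) == s)) //.
  rewrite (factor p r z (fun (_ _ _ _ : bool) => true)) //.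
  have -> : G p r (fun (_ _ _ _ : bool) => true) = Prob p (fun w => trial w == r) by [].
  by rewrite -mulf_div divff ?mul1r.
have hQP : forall z s, Qzsr p z s r * Pzsr p z s r
    = G p r (fun a b c d => ((if z then a else b) == s) && (if z then c else d))
      / Prob p (fun w => trial w == r).
  move=> z s; rewrite hP /Qzsr /CondP.
  have -> : Prob p (fun w => Yobs w && [&& treat w == z, Sobs w == s & trial w == r])
    = Prob p (fun w => (treat w == z) &&
         (fun a b c d => ((if z then a else b) == s) && (if z then c else d))
                 (S1 w) (S0 w) (Y1 w) (Y0 w) && (trial w == r)).
    apply: eq_bigl => w /=; rewrite /Sobs /Yobs.
    by case: (treat w); case: z; case: (S1 w); case: (S0 w); case: (Y1 w); case: (Y0 w);
      case: s; case: (trial w == r).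
  have -> : Prob p (fun w => [&& treat w == z, Sobs w == s & trial w == r])
    = Prob p (fun w => (treat w == z) && (fun a b (_ _ : bool) => (if z then a else b) == s)
                 (S1 w) (S0 w) (Y1 w) (Y0 w) && (trial w == r)).
    apply: eq_bigl => w /=; rewrite /Sobs.
    by case: (treat w); case: z; case: (S1 w); case: (S0 w); case: s; case: (trial w == r).
  rewrite (factor p r z (fun a b (_ _ : bool) => (if z then a else b) == s)) //.
  rewrite (factor p r z (fun a b c d => ((if z then a else b) == s) && (if z then c else d))) //.
  set G1 := G p r (fun a b (_ _ : bool) => (if z then a else b) == s).
  set G2 := G p r (fun a b c d => ((if z then a else b) == s) && (if z then c else d)).
  have le21 : G2 <= G1.
    rewrite /G1 /G2 /G; apply: Prob_le => // w /=; clear G1 G2; by case: z; case: (S1 w) (S0 w) (Y1 w) (Y0 w) => [] [] [] [];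
      case: s; case: (trial w == r).
  have ge2 : 0 <= G2 by apply: Prob_ge0.
  have [G10|G1n] := eqVneq G1 0.
    have G20 : G2 = 0 by apply/eqP; rewrite eq_le ge2 -G10 le21.
    by rewrite G10 G20 !mulr0 !mul0r.
  by rewrite -mulf_div divff // mul1r mulrA divfK.
have hACE : ACE_ss p r = (G p r (fun a b c (_ : bool) => [&& a, b & c])
     - G p r (fun a b (_ : bool) d => [&& a, b & d])) / G p r (fun a b (_ _ : bool) => a && b).
  rewrite /ACE_ss /CondE /G; congr (_ / _).
    rewrite (eq_bigr (fun w => p w * (Y1 w)%:R - p w * (Y0 w)%:R)) => [|w _]; last by rewrite mulrBr.
    rewrite sumrB; congr (_ - _); rewrite /Prob big_mkcond [RHS]big_mkcond;
      apply: eq_bigr => w _ /=;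
      by case: (S1 w) (S0 w) (Y1 w) (Y0 w) (trial w == r) => [] [] [] [] [];
         rewrite /= ?mulr1n ?mulr0n ?mulr1 ?mulr0.
  by apply: eq_bigl => w; rewrite andbA.
have hpi : pi_ss p r = G p r (fun a b (_ _ : bool) => a && b) / Prob p (fun w => trial w == r) by [].
have e1 : forall z s, (1 - Qzsr p z s r) * Pzsr p z s r
    = Pzsr p z s r - Qzsr p z s r * Pzsr p z s r by move=> z s; rewrite mulrBl mul1r.
rewrite /d !e1 !hQP !hP hACE hpi.
move: hlt; rewrite !hP => hlt.
apply: core => //; rewrite !atomsG !big_bool /=;
  have := p0 (r,true,true,true,true,true); have := p0 (r,true,true,true,true,false);
  have := p0 (r,true,true,true,false,true); have := p0 (r,true,true,true,false,false);
  have := p0 (r,true,true,false,true,true); have := p0 (r,true,true,false,true,false);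
  have := p0 (r,true,true,false,false,true); have := p0 (r,true,true,false,false,false);
  have := p0 (r,true,false,true,true,true); have := p0 (r,true,false,true,true,false);
  have := p0 (r,true,false,true,false,true); have := p0 (r,true,false,true,false,false);
  have := p0 (r,true,false,false,true,true); have := p0 (r,true,false,false,true,false);
  have := p0 (r,true,false,false,false,true); have := p0 (r,true,false,false,false,false);
  have := p0 (r,false,true,true,true,true); have := p0 (r,false,true,true,true,false);
  have := p0 (r,false,true,true,false,true); have := p0 (r,false,true,true,false,false);
  have := p0 (r,false,true,false,true,true); have := p0 (r,false,true,false,true,false);
  have := p0 (r,false,true,false,false,true); have := p0 (r,false,true,false,false,false);
  have := p0 (r,false,false,true,true,true); have := p0 (r,false,false,true,true,false);
  have := p0 (r,false,false,true,false,true); have := p0 (r,false,false,true,false,false);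
  have := p0 (r,false,false,false,true,true); have := p0 (r,false,false,false,true,false);
  have := p0 (r,false,false,false,false,true); have := p0 (r,false,false,false,false,false);
  lra.
Qed.
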